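(* For every positive integer $n$, $C_S(x^n y^n) = K[x^n y^n]$.
   Context: Standing conventions: $K$ is a field, $R = K[y]$, $\sigma$ is a $K$-algebra endomorphism of $R$ with $\deg_y(\sigma(y)) > 1$, and $\delta$ is a $K$-linear $\sigma$-derivation of $R$ ($\delta(ab) = \sigma(a)\delta(b) + \delta(a)b$). $S = R[x;\sigma,\delta]$ is the Ore extension (polynomials $\sum r_i x^i$, $r_i\in R$, with $xr = \sigma(r)x + \delta(r)$). $C_S(P)$ is the centralizer of $P$ in $S$, and $K[P] = \{\sum_i c_i P^i : c_i \in K\}$. *)

(* Defs.v *)
From HB Require Import structures.
From mathcomp Require Import all_boot all_order all_algebra.
Set Implicit Arguments. Unset Strict Implicit. Unset Printing Implicit Defensive.
Import GRing.Theory.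
Local Open Scope ring_scope.

(* Ore extension S = R[x; sigma, delta] with R = K[y] = {poly K}.
   An element  sum_i r_i x^i  (r_i in R) is represented by its coefficient
   list, i.e. by p : {poly {poly K}} with p`_i = r_i.  Only the additive
   structure of {poly {poly K}} is meaningful; the Ore product is [ore_mul]. *)

Section Ore.
Variable K : fieldType.
Variable sigma : {poly K} -> {poly K}.
Variable delta : {poly K} -> {poly K}.

(* left multiplication by x:  x * (sum_j s_j x^j) = sum_j (sigma s_j x^(j+1) + delta s_j x^j) *)
Definition ore_mulx (p : {poly {poly K}}) : {poly {poly K}} :=
  map_poly sigma p * 'X + map_poly delta p.

(* (sum_i r_i x^i) * g = sum_i r_i (x^i g);  r *: h multiplies each coefficient on the left by r *)
Definition ore_mul (f g : {poly {poly K}}) : {poly {poly K}} :=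
  \sum_(i < size f) f`_i *: iter i ore_mulx g.

Definition ore_pow (P : {poly {poly K}}) (n : nat) : {poly {poly K}} :=
  iter n (ore_mul P) 1.

Definition ore_centralizer (P : {poly {poly K}}) : pred {poly {poly K}} :=
  fun Q => ore_mul P Q == ore_mul Q P.

Definition ore_KP (P Q : {poly {poly K}}) : Prop :=
  exists cs : seq K, Q = \sum_(i < size cs) (cs`_i)%:P *: ore_pow P i.

End Ore.

(* Main.v *)
Require Import Defs.
From HB Require Import structures.
From mathcomp Require Import all_boot all_order all_algebra.
From mathcomp Require Import zify.
Import GRing.Theory.
Lemma exp_sub1_dvd (d a k : nat) : (0 < d)%N -> (d ^ a - 1 %| d ^ (a * k) - 1)%N.
Proof.
move=> d0; elim: k => [|k IH]; first by rewrite muln0 expn0 subnn dvdn0.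
have h1 : (0 < d ^ (a * k))%N by rewrite expn_gt0 d0.
have h2 : (0 < d ^ a)%N by rewrite expn_gt0 d0.
have -> : (d ^ (a * k.+1) - 1 = d ^ a * (d ^ (a * k) - 1) + (d ^ a - 1))%N.
  rewrite mulnS expnD. nia.
by rewrite dvdn_add // dvdn_mull.
Qed.

Lemma two_le_exp (d g : nat) : (1 < d)%N -> (2 * g.+1 <= d ^ g.+1)%N.
Proof.
move=> d1; elim: g => [|g IH]; first by rewrite expn1 muln1.
rewrite expnS. nia.
Qed.

Lemma pow_lb (u t : nat) : (1 <= u)%N -> (u ^ t.+1 >= 1 + (u - 1) * (1 + t * u))%N.
Proof.
case: u => [//|v] _; rewrite subn1 /=.
elim: t => [|t IH]; first by rewrite expn1; nia.
rewrite expnS. have := leq_mul (leqnn v.+1) IH.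
set X := (v.+1 ^ t.+1)%N. nia.
Qed.

Lemma arith (d n m e : nat) : (1 < d)%N -> (0 < n)%N ->
  (e * d ^ n + n * d ^ n = e + n * d ^ n * d ^ m)%N -> (n %| m)%N.
Proof.
move=> d1 n0 E.
have d0 : (0 < d)%N by apply: ltnW.
set Pr := fun a => (d ^ n - 1 %| n * (d ^ a - 1))%N.
have Pm : Pr m.
  rewrite /Pr.
  have D2 : (2 <= d ^ n)%N.
    by apply: (leq_trans d1); rewrite -{1}(expn1 d) leq_pexp2l // ltnW.
  have M1 : (1 <= d ^ m)%N by rewrite expn_gt0 d0.
  have E2 : ((d ^ n - 1) * e = n * (d ^ m - 1) * d ^ n)%N by nia.
  have cop : coprime (d ^ n - 1) (d ^ n).
    rewrite subn1; apply: coprimePn; nia.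
  rewrite -(Gauss_dvdl _ cop) -E2. exact: dvdn_mulr.
have Pn : Pr n by rewrite /Pr dvdn_mull.
have Pmul : forall a k, Pr a -> Pr (a * k).
  move=> a k Pa; rewrite /Pr; apply: (dvdn_trans Pa).
  by rewrite dvdn_mul // exp_sub1_dvd.
have Psub : forall a b, (b <= a)%N -> Pr a -> Pr b -> Pr (a - b).
  move=> a b ba Pa Pb; rewrite /Pr.
  have h1 : (0 < d ^ b)%N by rewrite expn_gt0 d0.
  have h2 : (0 < d ^ (a - b))%N by rewrite expn_gt0 d0.
  have -> : (n * (d ^ (a - b) - 1) = n * (d ^ a - 1) - d ^ (a - b) * (n * (d ^ b - 1)))%N.
    have -> : (d ^ a = d ^ (a - b) * d ^ b)%N by rewrite -expnD subnK.
    nia.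
  by rewrite dvdn_sub // dvdn_mull.
have Pg : Pr (gcdn m n).
  case: (posnP m) => [->|m0]; first by rewrite gcd0n.
  case: (Bezoutl n m0) => a _ /dvdnP [k Hk].
  move: Hk; set g := gcdn m n => Hk.
  have -> : g = (m * k - n * a)%N by rewrite [(m*k)%N]mulnC -Hk mulnC addnK.
  apply: Psub; first by rewrite [(m*k)%N]mulnC -Hk mulnC leq_addl.
  - exact: Pmul.
  - exact: Pmul.
have g0 : (0 < gcdn m n)%N by rewrite gcdn_gt0 n0 orbT.
have gn : (gcdn m n %| n)%N by exact: dvdn_gcdr.
case: (ltngtP (gcdn m n) n) => [glt|ngt|geq]; last by rewrite -geq dvdn_gcdl.
  exfalso.
  case/dvdnP: gn => t Ht.
  have t2 : (2 <= t)%N by nia.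
  set g := gcdn m n in Pg g0 glt Ht.
  set u := (d ^ g)%N.
  have u2 : (2 * g <= u)%N.
    have := @two_le_exp d (g.-1) d1; rewrite prednK //; nia.
  have u1 : (1 <= u)%N by nia.
  have dn : (d ^ n = u ^ (t.-1).+1)%N by rewrite prednK ?Ht; [rewrite mulnC expnM | nia].
  have lb := @pow_lb u (t.-1) u1.
  have pos : (0 < n * (d ^ g - 1))%N.
    rewrite muln_gt0 n0 /=. rewrite subn_gt0. rewrite -{1}(expn0 d) ltn_exp2l //.
  have := dvdn_leq pos Pg.
  rewrite -/u dn.
  have k1 : (t * g < 1 + t.-1 * u)%N.
    have : (t.-1 * (2 * g) <= t.-1 * u)%N by rewrite leq_mul2l u2 orbT.
    case: t t2 {Ht dn lb} => [//|t'] /= t2.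
    have t'0 : (0 < t')%N by case: t' t2.
    have a : (g <= t' * g)%N by rewrite leq_pmull.
    rewrite mulnCA [(t'.+1 * g)%N]mulSn. move: a; generalize (t' * g)%N (t' * u)%N. lia.
  have k2 : (n * (u - 1) < (u - 1) * (1 + t.-1 * u))%N.
    have -> : (n * (u - 1) = (u - 1) * (t * g))%N by rewrite Ht mulnC.
    rewrite ltn_pmul2l //. rewrite subn_gt0. apply: (leq_trans _ u2). by rewrite -{1}(muln1 2) leq_mul2l g0.
  move: lb k2; generalize (u ^ t.-1.+1)%N ((u - 1) * (1 + t.-1 * u))%N (n * (u - 1))%N. lia.
by move: (dvdn_leq n0 gn); rewrite leqNgt ngt.
Qed.

Local Open Scope ring_scope.


Section Ore2.
Variable K : fieldType.
Variable sigma : {rmorphism {poly K} -> {poly K}}.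
Hypothesis sigma_K : forall c : K, sigma c%:P = c%:P.
Variable delta : {poly K} -> {poly K}.
Hypothesis delta_lin : forall (c : K) (a b : {poly K}), delta (c *: a + b) = c *: delta a + delta b.
Hypothesis delta_der : forall a b : {poly K}, delta (a * b) = sigma a * delta b + delta a * b.

Local Notation mulx := (ore_mulx sigma delta).
Local Notation omul := (ore_mul sigma delta).

Lemma delta0 : delta 0 = 0.
Proof.
have := delta_lin 1 0 0; rewrite !scale1r addr0 -{1}[delta 0]addr0 => h.
exact: (esym (addrI _ h)).
Qed.

Lemma deltaD a b : delta (a + b) = delta a + delta b.
Proof. by have := delta_lin 1 a b; rewrite !scale1r. Qed.

Lemma delta1 : delta 1 = 0.
Proof.
have := delta_der 1 1; rewrite !mulr1 rmorph1 mul1r -{1}[delta 1]addr0 => h.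
exact: (esym (addrI _ h)).
Qed.

Lemma deltaC c : delta c%:P = 0.
Proof.
by rewrite -alg_polyC -[c%:A]addr0 delta_lin delta1 delta0 scaler0 addr0.
Qed.

Lemma mulx0 : mulx 0 = 0.
Proof.
by rewrite /ore_mulx !map_poly0 mul0r addr0.
Qed.

Lemma mulxD g h : mulx (g + h) = mulx g + mulx h.
Proof.
apply/polyP=> i; rewrite /ore_mulx !(coefD, coefMX, coef_map_id0 _ _ (rmorph0 sigma), coef_map_id0 _ _ delta0).
by case: (i == 0%N); rewrite ?add0r ?rmorphD deltaD // addrACA.
Qed.

Lemma mulxZ r g : mulx (r *: g) = sigma r *: mulx g + delta r *: g.
Proof.
apply/polyP=> i; rewrite /ore_mulx !(coefD, coefZ, coefMX, coef_map_id0 _ _ (rmorph0 sigma), coef_map_id0 _ _ delta0).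
case: (i == 0%N); rewrite ?mulr0 ?add0r ?rmorphM ?delta_der //.
by rewrite mulrDr addrA.
Qed.

Lemma mulxC (c : K) g : mulx (c%:P *: g) = c%:P *: mulx g.
Proof. by rewrite mulxZ sigma_K deltaC scale0r addr0. Qed.

Lemma iter_mulx0 i : iter i mulx 0 = 0.
Proof. by elim: i => //= i ->; rewrite mulx0. Qed.

Lemma iter_mulxD i g h : iter i mulx (g + h) = iter i mulx g + iter i mulx h.
Proof. by elim: i => //= i ->; rewrite mulxD. Qed.

Lemma iter_mulxC i (c : K) g : iter i mulx (c%:P *: g) = c%:P *: iter i mulx g.
Proof. by elim: i => //= i ->; rewrite mulxC. Qed.

Lemma mulx_sum I (r : seq I) (F : I -> {poly {poly K}}) :
  mulx (\sum_(i <- r) F i) = \sum_(i <- r) mulx (F i).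
Proof. exact: (big_morph _ mulxD mulx0). Qed.

Lemma iter_mulx1 i : iter i mulx 1 = 'X^i.
Proof.
elim: i => //= i ->.
rewrite /ore_mulx.
have -> : map_poly delta 'X^i = 0.
  by apply/polyP=> j; rewrite coef_map_id0 ?delta0 // coefXn coef0; case: (j == i); rewrite ?delta1 ?delta0.
by rewrite addr0 rmorphXn /= map_polyX exprSr.
Qed.

Lemma ore_mulE N (f g : {poly {poly K}}) : (size f <= N)%N ->
  omul f g = \sum_(i < N) f`_i *: iter i mulx g.
Proof.
move=> fN; rewrite /ore_mul (big_ord_widen _ (fun i => f`_i *: iter i mulx g) fN).
rewrite big_mkcond; apply: eq_bigr => i _.
by case: ifP => // /negbT; rewrite -leqNgt => /(nth_default 0) ->; rewrite scale0r.
Qed.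

Lemma ore_mul0l g : omul 0 g = 0.
Proof. by rewrite /ore_mul size_poly0 big_ord0. Qed.

Lemma ore_mulDl f1 f2 g : omul (f1 + f2) g = omul f1 g + omul f2 g.
Proof.
set N := maxn (size f1) (size f2).
rewrite !(ore_mulE N) ?leq_maxl ?leq_maxr //; last first.
  by apply: (leq_trans (size_add _ _)).
by rewrite -big_split /=; apply: eq_bigr => i _; rewrite coefD scalerDl.
Qed.

Lemma ore_mulZl r f g : omul (r *: f) g = r *: omul f g.
Proof.
rewrite !(ore_mulE (size f)) ?size_scale_leq //.
by rewrite scaler_sumr; apply: eq_bigr => i _; rewrite coefZ scalerA.
Qed.

Lemma ore_mul_suml I (r : seq I) (F : I -> {poly {poly K}}) g :
  omul (\sum_(i <- r) F i) g = \sum_(i <- r) omul (F i) g.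
Proof. exact: (big_morph (fun f => omul f g) (fun a b => ore_mulDl a b g) (ore_mul0l g)). Qed.

Lemma ore_mul0r f : omul f 0 = 0.
Proof. by rewrite /ore_mul big1 // => i _; rewrite iter_mulx0 scaler0. Qed.

Lemma ore_mulDr f g h : omul f (g + h) = omul f g + omul f h.
Proof.
by rewrite /ore_mul -big_split; apply: eq_bigr => i _; rewrite iter_mulxD scalerDr.
Qed.

Lemma ore_mulCr f (c : K) g : omul f (c%:P *: g) = c%:P *: omul f g.
Proof.
rewrite /ore_mul scaler_sumr; apply: eq_bigr => i _.
by rewrite iter_mulxC !scalerA mulrC.
Qed.

Lemma ore_mul_sumr I (r : seq I) (F : I -> {poly {poly K}}) f :
  omul f (\sum_(i <- r) F i) = \sum_(i <- r) omul f (F i).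
Proof. exact: (big_morph (omul f) (ore_mulDr f) (ore_mul0r f)). Qed.

Lemma ore_mul1l g : omul 1 g = g.
Proof. by rewrite /ore_mul size_poly1 big_ord1 coef1 /= scale1r. Qed.

Lemma ore_mul1r f : omul f 1 = f.
Proof.
rewrite /ore_mul; under eq_bigr do rewrite iter_mulx1.
by rewrite -poly_def coefK.
Qed.

Lemma ore_mul_mulx f h : omul (mulx f) h = mulx (omul f h).
Proof.
have Hs : (size (mulx f) <= (size f).+1)%N.
  rewrite /ore_mulx; apply: (leq_trans (size_add _ _)); rewrite geq_max; apply/andP; split.
    apply: (leq_trans (size_mul_leq _ _)); rewrite size_polyX addn2 /=.
    by rewrite ltnS /map_poly; exact: size_poly.
  by rewrite /map_poly; apply: (leq_trans (size_poly _ _)).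
rewrite (ore_mulE _ _ _ Hs) /ore_mul mulx_sum.
under eq_bigr do rewrite /ore_mulx coefD coefMX (coef_map_id0 _ _ delta0) (coef_map_id0 _ _ (rmorph0 sigma)) scalerDl.
rewrite big_split /= big_ord_recl /= scale0r add0r big_ord_recr /=.
rewrite nth_default // delta0 scale0r addr0 -big_split /=.
apply: eq_bigr => i _.
rewrite -/(ore_mulx sigma delta (f`_i *: iter i mulx h)) mulxZ.
by [].
Qed.

Lemma ore_mul_iter i f h : omul (iter i mulx f) h = iter i mulx (omul f h).
Proof. by elim: i => //= i IH; rewrite ore_mul_mulx IH. Qed.

Lemma ore_mulA f g h : omul (omul f g) h = omul f (omul g h).
Proof.
have -> : omul f g = \sum_(i < size f) f`_i *: iter i mulx g by [].
rewrite ore_mul_suml.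
have -> : omul f (omul g h) = \sum_(i < size f) f`_i *: iter i mulx (omul g h) by [].
by apply: eq_bigr => i _; rewrite ore_mulZl ore_mul_iter.
Qed.

Lemma pow_comm P k : omul (ore_pow sigma delta P k) P = omul P (ore_pow sigma delta P k).
Proof.
elim: k => [|k IH]; first by rewrite /= ore_mul1l ore_mul1r.
have -> : ore_pow sigma delta P k.+1 = omul P (ore_pow sigma delta P k) by [].
by rewrite ore_mulA IH.
Qed.

Lemma sigma_comp a : sigma a = a \Po sigma 'X.
Proof.
elim/poly_ind: a => [|a c IH]; first by rewrite rmorph0 comp_poly0.
by rewrite rmorphD rmorphM IH sigma_K comp_polyD comp_polyM comp_polyX comp_polyC.
Qed.

Hypothesis sigma_deg : (2 < size (sigma 'X))%N.
Local Notation d := (size (sigma 'X)).-1.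

Lemma size_sigma a : a != 0 -> sigma a != 0 /\ (size (sigma a)).-1 = ((size a).-1 * d)%N.
Proof.
move=> a0.
have E : (size (sigma a)).-1 = ((size a).-1 * d)%N by rewrite sigma_comp size_comp_poly.
split=> //.
case: (ltnP 1 (size a)) => ha.
  rewrite -size_poly_eq0; apply/eqP => h; move: E; rewrite h /=.
  move/eqP; rewrite eq_sym muln_eq0; apply/negP; rewrite negb_or.
  apply/andP; split; rewrite -lt0n; [by case: (size a) ha => [|[]] | by case: (size (sigma 'X)) sigma_deg => [|[]]].
rewrite (size1_polyC ha) sigma_K.
move: a0; rewrite {1}(size1_polyC ha) !polyC_eq0 //.
Qed.

Lemma size_iter k a : a != 0 ->
  iter k sigma a != 0 /\ (size (iter k sigma a)).-1 = ((size a).-1 * d ^ k)%N.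
Proof.
move=> a0; elim: k => [|k [IH1 IH2]]; first by rewrite expn0 muln1.
have [h1 h2] := size_sigma _ IH1.
by split => //=; rewrite h2 IH2 expnSr mulnA.
Qed.

Lemma iter_sigmaD k a b : iter k sigma (a + b) = iter k sigma a + iter k sigma b.
Proof. by elim: k => //= k ->; rewrite rmorphD. Qed.
Lemma iter_sigmaN k a : iter k sigma (- a) = - iter k sigma a.
Proof. by elim: k => //= k ->; rewrite rmorphN. Qed.
Lemma iter_sigmaM k a b : iter k sigma (a * b) = iter k sigma a * iter k sigma b.
Proof. by elim: k => //= k ->; rewrite rmorphM. Qed.
Lemma iter_sigmaC k c : iter k sigma c%:P = c%:P.
Proof. by elim: k => //= k ->; rewrite sigma_K. Qed.

Lemma size_mulx h : h != 0 -> size (mulx h) = (size h).+1 /\ lead_coef (mulx h) = sigma (lead_coef h).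
Proof.
move=> h0.
have l0' : lead_coef h != 0 by rewrite lead_coef_eq0.
have [l0 _] := size_sigma _ l0'.
have sm : size (map_poly sigma h) = size h by rewrite size_map_poly_id0.
have m0 : map_poly sigma h != 0 by rewrite -size_poly_eq0 sm size_poly_eq0.
have s1 : size (map_poly sigma h * 'X) = (size h).+1 by rewrite size_mulX // sm.
have s2 : (size (map_poly delta h) < size (map_poly sigma h * 'X)%R)%N.
  by rewrite s1 ltnS /map_poly; exact: size_poly.
rewrite /ore_mulx size_addl // lead_coefDl // lead_coefMX lead_coef_map_id0 //.
exact: rmorph0.
Qed.

Lemma size_iter_mulx i h : h != 0 ->
  size (iter i mulx h) = (size h + i)%N /\ lead_coef (iter i mulx h) = iter i sigma (lead_coef h).
Proof.
move=> h0; elim: i => [|i [IH1 IH2]]; first by rewrite addn0.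
have hi : iter i mulx h != 0 by rewrite -size_poly_eq0 IH1 addn_eq0 size_poly_eq0 (negbTE h0).
have [E1 E2] := size_mulx _ hi.
by rewrite /= E1 E2 IH1 IH2 addnS.
Qed.

Lemma size_omul f h : f != 0 -> h != 0 ->
  size (omul f h) = (size f + size h).-1 /\
  lead_coef (omul f h) = lead_coef f * iter (size f).-1 sigma (lead_coef h).
Proof.
move=> f0 h0.
have sf : size f = (size f).-1.+1 by rewrite prednK // size_poly_gt0.
set s := (size f).-1 in sf *.
have fs : (size f <= s.+1)%N by rewrite sf.
rewrite (ore_mulE _ _ _ fs) big_ord_recr /=.
have [T1 T2] := size_iter_mulx s _ h0.
have lf : f`_s != 0 by rewrite /s -lead_coefE lead_coef_eq0.
have ST : size (f`_s *: iter s mulx h) = (size h + s)%N by rewrite size_scale.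
have SS : (size (\sum_(i < s) f`_i *: iter i mulx h)%R < size h + s)%N.
  apply: (big_ind (fun x : {poly {poly K}} => size x < size h + s)%N).
  - by rewrite size_poly0 addn_gt0 size_poly_gt0 h0.
  - by move=> x y hx hy; apply: (leq_ltn_trans (size_add _ _)); rewrite gtn_max hx hy.
  - move=> i _; apply: (leq_ltn_trans (size_scale_leq _ _)).
    by have [-> _] := size_iter_mulx i _ h0; rewrite ltn_add2l.
rewrite addrC size_addl ?ST // lead_coefDl ?ST // lead_coefZ T2.
split; last by rewrite lead_coefE -/s.
rewrite sf addSn /=; by rewrite addnC.
Qed.

Lemma deg_mul (a b : {poly K}) : a != 0 -> b != 0 ->
  (size (a * b)).-1 = ((size a).-1 + (size b).-1)%N.
Proof.
move=> a0 b0; rewrite size_mul //.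
have := size_poly_gt0 a; have := size_poly_gt0 b; rewrite a0 b0 /=.
case: (size a) => // sa; case: (size b) => // sb _ _ /=. lia.
Qed.

Lemma top0 (r : {poly {poly K}}) N : (size r <= N.+1)%N -> r`_N = 0 -> (size r <= N)%N.
Proof.
move=> h1 h2; case: (ltngtP (size r) N.+1) => [lt|gt|E]; first by rewrite -ltnS.
  by move: gt; rewrite ltnNge h1.
have : lead_coef r = 0 by rewrite lead_coefE E.
by move/eqP; rewrite lead_coef_eq0 => /eqP ->; rewrite size_poly0.
Qed.

Lemma top0' (r : {poly K}) N : (size r <= N.+1)%N -> r`_N = 0 -> (size r <= N)%N.
Proof.
move=> h1 h2; case: (ltngtP (size r) N.+1) => [lt|gt|E]; first by rewrite -ltnS.
  by move: gt; rewrite ltnNge h1.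
have : lead_coef r = 0 by rewrite lead_coefE E.
by move/eqP; rewrite lead_coef_eq0 => /eqP ->; rewrite size_poly0.
Qed.

Lemma d_ge2 : (2 <= d)%N.
Proof. by case: (size (sigma 'X)) sigma_deg. Qed.

Lemma deg_eq n (a b : {poly K}) : (0 < n)%N -> a != 0 -> b != 0 ->
  iter n sigma a * b = a * iter n sigma b -> (size a).-1 = (size b).-1.
Proof.
move=> n0 a0 b0 E.
have [ta0 ta] := size_iter n _ a0; have [tb0 tb] := size_iter n _ b0.
have := congr1 (fun x : {poly K} => (size x).-1) E; rewrite /= !deg_mul // ta tb.
have D2 : (2 <= d ^ n)%N.
  apply: (leq_trans d_ge2); rewrite -{1}(expn1 d) leq_pexp2l //.
  by apply: (leq_trans _ d_ge2).
move: D2; generalize (d ^ n)%N => D D2. set x := (size a).-1; set y := (size b).-1. clearbody x y. case: (ltngtP x y) => [h|h|->] //.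
  - move: (subnK h); generalize (y - x.+1)%N => u <-; nia.
  - move: (subnK h); generalize (x - y.+1)%N => u <-; nia.
Qed.

Lemma ratio n (q l : {poly K}) : (0 < n)%N -> q != 0 -> l != 0 ->
  iter n sigma q * l = q * iter n sigma l -> exists c : K, q = c%:P * l.
Proof.
move=> n0 q0 l0 E.
have El := deg_eq _ _ _ n0 q0 l0 E.
set c := lead_coef q / lead_coef l.
exists c.
set r := q - c%:P * l.
case: (eqVneq r 0) => [/eqP|r0]; first by rewrite subr_eq0 => /eqP.
exfalso.
have Er : iter n sigma r * l = r * iter n sigma l.
  rewrite /r iter_sigmaD iter_sigmaN iter_sigmaM iter_sigmaC !mulrBl E.
  by rewrite -!mulrA [iter n sigma l * l]mulrC.
have Erl := deg_eq _ _ _ n0 r0 l0 Er.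
have sq : size q = (size q).-1.+1 by rewrite prednK // size_poly_gt0.
have pl := size_poly_gt0 l; have pq := size_poly_gt0 q; have pr := size_poly_gt0 r.
rewrite l0 in pl; rewrite q0 in pq; rewrite r0 in pr.
have sl : size l = size q by move: El pl pq; generalize (size l) (size q) => x y; lia.
have hr : (size r <= (size q).-1)%N.
  apply: top0'.
    rewrite -sq /r; apply: (leq_trans (size_add _ _)); rewrite geq_max leqnn /= size_opp.
    apply: (leq_trans (size_mul_leq _ _)); rewrite size_polyC sl.
    by case: (c != 0); rewrite /= ?add1n ?add0n ?leq_pred.
  rewrite /r coefB coefCM -lead_coefE El -lead_coefE /c mulfVK ?subrr //.
  by rewrite lead_coef_eq0.
move: hr Erl El pr pq; generalize (size r) (size l) (size q) => x y z; lia.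
Qed.


Variable n : nat.
Hypothesis n_pos : (0 < n)%N.
Local Notation P := (omul ('X^n : {poly {poly K}}) ('X^n : {poly K})%:P).
Local Notation pow := (ore_pow sigma delta P).
Local Notation p := (iter n sigma ('X^n : {poly K})).

Lemma P_prop : size P = n.+1 /\ lead_coef P = p.
Proof.
have x0 : ('X^n : {poly {poly K}}) != 0 by rewrite -size_poly_eq0 size_polyXn.
have x1 : ('X^n : {poly K}) != 0 by rewrite -size_poly_eq0 size_polyXn.
have c0 : ('X^n : {poly K})%:P != 0 by rewrite polyC_eq0.
have [-> ->] := size_omul _ _ x0 c0.
by rewrite size_polyXn size_polyC x1 lead_coefXn mul1r lead_coefC addn1.
Qed.

Lemma P_neq0 : P != 0.
Proof. by rewrite -size_poly_eq0; case: P_prop => ->. Qed.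

Lemma p_neq0 : p != 0.
Proof.
have x1 : ('X^n : {poly K}) != 0 by rewrite -size_poly_eq0 size_polyXn.
by case: (size_iter n _ x1).
Qed.

Lemma size_pow k : size (pow k) = (k * n).+1.
Proof.
elim: k => [|k IH]; first by rewrite /= size_poly1.
have -> : pow k.+1 = omul P (pow k) by [].
have pk : pow k != 0 by rewrite -size_poly_eq0 IH.
have [-> _] := size_omul _ _ P_neq0 pk.
by case: P_prop => -> _; rewrite IH mulSn addSn /= addnS.
Qed.

Lemma lead_eq Q : Q != 0 -> omul P Q = omul Q P ->
  p * iter n sigma (lead_coef Q) = lead_coef Q * iter (size Q).-1 sigma p.
Proof.
move=> Q0 E.
have [_ L1] := size_omul _ _ P_neq0 Q0; have [_ L2] := size_omul _ _ Q0 P_neq0.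
case: P_prop L1 L2 => -> -> /= L1 L2.
by rewrite -L1 -L2 E.
Qed.

Definition KPf Q := exists (F : nat -> K) (M : nat), Q = \sum_(i < M) (F i)%:P *: pow i.

Lemma KPf0 : KPf 0.
Proof. by exists (fun _ => 0), 0%N; rewrite big_ord0. Qed.

Lemma KPf_add Q c k : KPf Q -> KPf (Q + c%:P *: pow k).
Proof.
case=> F [M ->].
exists (fun i => (if (i < M)%N then F i else 0) + (if i == k then c else 0)), (maxn M k.+1).
symmetry; under eq_bigr => i _ do rewrite polyCD scalerDl.
rewrite big_split /=; congr (_ + _).
  rewrite (big_ord_widen _ (fun i => (F i)%:P *: pow i) (leq_maxl M k.+1)).
  rewrite [RHS]big_mkcond /=. by apply: eq_bigr => i _; case: ifP => // _; rewrite scale0r.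
have hk : (k < maxn M k.+1)%N by rewrite leq_max leqnn orbT.
rewrite (bigD1 (Ordinal hk)) //= eqxx big1 ?addr0 // => i ne.
case: eqP => [E|_]; last by rewrite scale0r.
by move: ne; rewrite -val_eqE /= E eqxx.
Qed.

Lemma KPf_iff Q : KPf Q <-> ore_KP sigma delta P Q.
Proof.
split.
  case=> F [M ->]; exists (mkseq F M).
  rewrite size_mkseq; apply: eq_bigr => i _; by rewrite nth_mkseq.
by case=> cs ->; exists (nth 0 cs), (size cs).
Qed.

Lemma KPf_comm Q : KPf Q -> omul P Q = omul Q P.
Proof.
case=> F [M ->].
rewrite ore_mul_sumr ore_mul_suml; apply: eq_bigr => i _.
by rewrite ore_mulCr ore_mulZl pow_comm.
Qed.

Lemma hard N (Q : {poly {poly K}}) : (size Q <= N)%N -> omul P Q = omul Q P -> KPf Q.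
Proof.
elim: N Q => [|N IH] Q sQ comm.
  by move: sQ; rewrite leqn0 size_poly_eq0 => /eqP ->; exact: KPf0.
case: (eqVneq Q 0) => [->|Q0]; first exact: KPf0.
set m := (size Q).-1.
have sQm : size Q = m.+1 by rewrite prednK // size_poly_gt0.
set q := lead_coef Q.
have q0 : q != 0 by rewrite lead_coef_eq0.
have Lq := lead_eq _ Q0 comm.
rewrite -/q -/m in Lq.
have x1 : ('X^n : {poly K}) != 0 by rewrite -size_poly_eq0 size_polyXn.
have [_ dp] := size_iter n _ x1.
rewrite size_polyXn /= in dp.
have [tq0 dtq] := size_iter n _ q0.
have [sp0 dsp] := size_iter m _ p_neq0.
have := congr1 (fun x : {poly K} => (size x).-1) Lq.
rewrite /= !deg_mul ?p_neq0 // dtq dsp dp => Edeg.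
have nm : (n %| m)%N.
  apply: (@arith d n m (size q).-1) => //; first exact: d_ge2.
  by rewrite addnC Edeg.
case/dvdnP: nm => k mk.
have sPk : size (pow k) = m.+1 by rewrite size_pow mk.
have Pk0 : pow k != 0 by rewrite -size_poly_eq0 sPk.
set l := lead_coef (pow k).
have l0 : l != 0 by rewrite lead_coef_eq0.
have Ll := lead_eq _ Pk0 (esym (pow_comm P k)).
rewrite sPk /= in Ll.
have Eql : iter n sigma q * l = q * iter n sigma l.
  apply: (mulfI p_neq0).
  rewrite mulrA Lq -/m -mulrA [_ * l]mulrC mulrA.
  by rewrite mulrCA Ll mulrA.
have [c qc] := ratio _ _ _ n_pos q0 l0 Eql.
set Q' := Q + (-c)%:P *: pow k.
have hQ : Q = Q' + c%:P *: pow k.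
  by rewrite /Q' -addrA -scalerDl polyCN addNr scale0r addr0.
rewrite hQ; apply: KPf_add; apply: IH.
  have : (size Q' <= m)%N.
    apply: top0.
      rewrite /Q'; apply: (leq_trans (size_add _ _)); rewrite geq_max sQm leqnn /=.
      by apply: (leq_trans (size_scale_leq _ _)); rewrite sPk.
    rewrite /Q' coefD coefZ.
    have -> : Q`_m = q by rewrite /q lead_coefE.
    have -> : (pow k)`_m = l by rewrite /l lead_coefE sPk.
    by rewrite qc polyCN mulNr addrN.
  by move=> h; apply: (leq_trans h); rewrite -ltnS -sQm.
rewrite /Q' ore_mulDr ore_mulDl ore_mulCr ore_mulZl comm pow_comm //.
Qed.

Lemma main_ore Q :
  Q \in ore_centralizer sigma delta P <-> ore_KP sigma delta P Q.
Proof.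
rewrite -KPf_iff.
have -> : (Q \in ore_centralizer sigma delta P) = (omul P Q == omul Q P) by [].
split; first by move/eqP; exact: (hard _ _ (leqnn _)).
by move/KPf_comm => ->.
Qed.

End Ore2.

Theorem proposition5p8 (K : fieldType)
  (sigma : {rmorphism {poly K} -> {poly K}})
  (sigma_K : forall c : K, sigma c%:P = c%:P)
  (sigma_deg : (2 < size (sigma 'X))%N)
  (delta : {poly K} -> {poly K})
  (delta_lin : forall (c : K) (a b : {poly K}), delta (c *: a + b) = c *: delta a + delta b)
  (delta_der : forall a b : {poly K}, delta (a * b) = sigma a * delta b + delta a * b)
  (n : nat) (n_pos : (0 < n)%N) :
  let P := ore_mul sigma delta 'X^n ('X^n)%:P in
  forall Q : {poly {poly K}},
    Q \in ore_centralizer sigma delta P <-> ore_KP sigma delta P Q.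
Proof.
move=> P Q.
exact: (main_ore _ _ sigma_K _ delta_lin delta_der sigma_deg _ n_pos Q).
Qed.
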